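(* There is a representation (unital $\mathbb C$-algebra homomorphism) $\overline{\mathcal H}\to\operatorname{Mat}_{2D}(\mathbb C)$ such that $\mathcal T\mapsto\mathfrak t$, $\mathcal T'\mapsto\mathfrak t'$, $\mathcal U\mapsto\mathfrak u$, $\mathcal U'\mapsto\mathfrak u'$, $\mathcal X\mapsto\mathfrak x$.
   Context: Let $q$ be a prime power, $D\ge3$ an integer and $e\in\{0,\tfrac12,1,\tfrac32,2\}$ (with $q$ a square when $e\in\{\tfrac12,\tfrac32\}$). Let $\kappa=q^{-e/2}$ and $\kappa'=\sqrt{-1}\,q^{-D/2}$. The nil-DAHA $\overline{\mathcal H}=\overline{\mathcal H}(\kappa,\kappa')$ is the $\mathbb C$-algebra generated by $\mathcal T^{\pm1},\mathcal U,\mathcal X^{\pm1}$ (with $\mathcal T\mathcal T^{-1}=\mathcal T^{-1}\mathcal T=1$, $\mathcal X\mathcal X^{-1}=\mathcal X^{-1}\mathcal X=1$) subject to $(\mathcal T-\kappa)(\mathcal T+\kappa^{-1})=0$, $(\mathcal T'-\kappa')(\mathcal T'+\kappa'^{-1})=0$, $\mathcal U(\mathcal U+1)=0$, $\mathcal U'^2=0$, where $\mathcal T'=\mathcal X\mathcal T^{-1}$ and $\mathcal U'=\mathcal X^{-1}(\mathcal U+1)$. Define $2\times2$ matrices: for $0\le i\le D-1$, $t(i)=\begin{pmatrix} q^{-e/2}-q^{e/2} & q^{e/2}\\ q^{-e/2}&0\end{pmatrix}$, $u'(i)=\begin{pmatrix}0&0\\ -\sqrt{-1}\,q^{(D-e)/2-i}&0\end{pmatrix}$;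 for $1\le i\le D-1$, $t'(i)=\sqrt{-1}\begin{pmatrix} q^{-D/2}(q^D-q^i+1) & q^{D/2}(q^{i-D}-1)\\ q^{-D/2}(1-q^i) & q^{i-D/2}\end{pmatrix}$, $u(i)=\begin{pmatrix}-1&1-q^{D-i}\\0&0\end{pmatrix}$; and $1\times1$ matrices $t'(0)=t'(D)=(\sqrt{-1}\,q^{-D/2})$, $u(0)=(0)$, $u(D)=(-1)$. Let $\mathfrak t=\operatorname{blockdiag}(t(0),\dots,t(D-1))$, $\mathfrak t'=\operatorname{blockdiag}(t'(0),\dots,t'(D))$, $\mathfrak u=\operatorname{blockdiag}(u(0),\dots,u(D))$, $\mathfrak u'=\operatorname{blockdiag}(u'(0),\dots,u'(D-1))$, all $2D\times2D$, and $\mathfrak x=\mathfrak t'\mathfrak t$. *)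

(* Defs.v *)
From HB Require Import structures.
From mathcomp Require Import all_boot all_order all_algebra.
Set Implicit Arguments. Unset Strict Implicit. Unset Printing Implicit Defensive.
Import Order.TTheory GRing.Theory Num.Theory.
Local Open Scope ring_scope.

(* Conventions: the field of complex numbers is modelled by an arbitrary
   numClosedFieldType C ('i is sqrt(-1)).  The parameter e in {0,1/2,1,3/2,2}
   is encoded as m = 2e in {0,1,2,3,4}.  All fractional powers of q are
   expressed via the positive real fourth root r = q^(1/4):
   qp q z = q^(z/4) for z : int. *)

Definition qr (C : numClosedFieldType) (q : nat) : C := 4.-root (q%:R : C).
Definition qp (C : numClosedFieldType) (q : nat) (z : int) : C := qr C q ^ z.

(* kappa = q^{-e/2} = q^{-m/4};  kappa' = sqrt(-1) q^{-D/2} *)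
Definition kappa (C : numClosedFieldType) (q m : nat) : C := qp C q (- (m%:Z)).
Definition kappa' (C : numClosedFieldType) (q D : nat) : C :=
  'i * qp C q (- (2 * D)%:Z).

(* Block diagonal matrices written out entrywise.
   even_blk f: blocks of size 2 occupying rows/cols {2i, 2i+1}, i = 0..D-1;
     entry (a,b) = f (a/2) (local row) (local col), local index = parity.
   odd_blk f: blocks 0 = {0} (1x1), i = {2i-1, 2i} for 1<=i<=D-1, D = {2D-1}
     (1x1); i.e. shift indices by one. The 1x1 block 0 corresponds to local
     index (true,true), block D to local index (false,false). *)
Definition even_blk (C : numClosedFieldType) (D : nat)
  (f : nat -> bool -> bool -> C) : 'M[C]_(2 * D) :=
  \matrix_(a < 2 * D, b < 2 * D)
    if (a : nat)./2 == (b : nat)./2 then f (a : nat)./2 (odd a) (odd b) else 0.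

Definition odd_blk (C : numClosedFieldType) (D : nat)
  (f : nat -> bool -> bool -> C) : 'M[C]_(2 * D) :=
  \matrix_(a < 2 * D, b < 2 * D)
    if (a : nat).+1./2 == (b : nat).+1./2
    then f (a : nat).+1./2 (odd (a : nat).+1) (odd (b : nat).+1) else 0.

(* t(i) = [[q^{-e/2}-q^{e/2}, q^{e/2}],[q^{-e/2}, 0]] *)
Definition t_blk (C : numClosedFieldType) (q m : nat) (i : nat) (r c : bool) : C :=
  match r, c with
  | false, false => qp C q (- (m%:Z)) - qp C q (m%:Z)
  | false, true => qp C q (m%:Z)
  | true, false => qp C q (- (m%:Z))
  | true, true => 0
  end.

(* u'(i) = [[0,0],[-sqrt(-1) q^{(D-e)/2 - i}, 0]] *)
Definition u'_blk (C : numClosedFieldType) (q D m : nat) (i : nat) (r c : bool) : C :=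
  match r, c with
  | true, false => - 'i * qp C q ((2 * D)%:Z - m%:Z - (4 * i)%:Z)
  | _, _ => 0
  end.

(* t'(0) = t'(D) = (sqrt(-1) q^{-D/2}); for 1 <= i <= D-1,
   t'(i) = sqrt(-1) [[q^{-D/2}(q^D-q^i+1), q^{D/2}(q^{i-D}-1)],
                     [q^{-D/2}(1-q^i),     q^{i-D/2}]] *)
Definition t'_blk (C : numClosedFieldType) (q D : nat) (i : nat) (r c : bool) : C :=
  let Q : C := q%:R in
  if i == 0%N then (if r && c then 'i * qp C q (- (2 * D)%:Z) else 0)
  else if i == D then (if ~~ r && ~~ c then 'i * qp C q (- (2 * D)%:Z) else 0)
  else match r, c with
  | false, false => 'i * (qp C q (- (2 * D)%:Z) * (Q ^+ D - Q ^+ i + 1))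
  | false, true => 'i * (qp C q ((2 * D)%:Z) * (Q ^ (i%:Z - D%:Z) - 1))
  | true, false => 'i * (qp C q (- (2 * D)%:Z) * (1 - Q ^+ i))
  | true, true => 'i * qp C q ((4 * i)%:Z - (2 * D)%:Z)
  end.

(* u(0) = (0), u(D) = (-1); for 1 <= i <= D-1, u(i) = [[-1, 1-q^{D-i}],[0,0]] *)
Definition u_blk (C : numClosedFieldType) (q D : nat) (i : nat) (r c : bool) : C :=
  let Q : C := q%:R in
  if i == 0%N then 0
  else if i == D then (if ~~ r && ~~ c then -1 else 0)
  else match r, c with
  | false, false => -1
  | false, true => 1 - Q ^+ (D - i)
  | _, _ => 0
  end.

Definition tmat (C : numClosedFieldType) (q D m : nat) : 'M[C]_(2 * D) :=
  even_blk D (t_blk C q m).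
Definition u'mat (C : numClosedFieldType) (q D m : nat) : 'M[C]_(2 * D) :=
  even_blk D (u'_blk C q D m).
Definition t'mat (C : numClosedFieldType) (q D : nat) : 'M[C]_(2 * D) :=
  odd_blk D (t'_blk C q D).
Definition umat (C : numClosedFieldType) (q D : nat) : 'M[C]_(2 * D) :=
  odd_blk D (u_blk C q D).
Definition xmat (C : numClosedFieldType) (q D m : nat) : 'M[C]_(2 * D) :=
  t'mat C q D *m tmat C q D m.

(* A unital algebra homomorphism from the nil-DAHA H(k,k') (presented by
   generators T^{±1}, U, X^{±1} and relations) to Mat_n(C) is, by definition
   of a presented algebra, the same as a choice of images T, Ti, U, X, Xi of
   the generators T, T^{-1}, U, X, X^{-1} satisfying the defining relations. *)
Definition nilDAHA_rep (C : numClosedFieldType) (n : nat) (k k' : C)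
  (T Ti U X Xi : 'M[C]_n) : Prop :=
  let T' := X *m Ti in
  let U' := Xi *m (U + 1%:M) in
  T *m Ti = 1%:M /\ Ti *m T = 1%:M /\ X *m Xi = 1%:M /\ Xi *m X = 1%:M /\
  (T - k%:M) *m (T + k^-1%:M) = 0 /\
  (T' - k'%:M) *m (T' + k'^-1%:M) = 0 /\
  U *m (U + 1%:M) = 0 /\
  U' *m U' = 0.

(* Main.v *)
Require Import Defs.
From mathcomp Require Import all_boot all_order all_algebra.
From mathcomp Require Import ring zify.
From Stdlib Require Import Lia.
Import GRing.Theory Num.Theory.
Local Open Scope ring_scope.

Lemma eqn_half (a b : nat) : (a == b) = (a./2 == b./2) && (odd a == odd b).
Proof.
case: eqP => [->|neq]; first by rewrite !eqxx.
apply/esym/negbTE/negP => /andP[/eqP h1 /eqP h2]; apply: neq.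
by rewrite -[a]odd_double_half -[b]odd_double_half h1 h2.
Qed.

Lemma sum_two (C : nzRingType) n (F : 'I_n -> C) (j1 j2 : 'I_n) : j1 != j2 ->
  (forall j, j != j1 -> j != j2 -> F j = 0) -> \sum_j F j = F j1 + F j2.
Proof.
move=> ne H; rewrite (bigD1 j1) // (bigD1 j2) 1?eq_sym //= big1 ?addr0 // => j /andP[h2 h1].
exact: H.
Qed.

Lemma sum_one (C : nzRingType) n (F : 'I_n -> C) (j1 : 'I_n) :
  (forall j, j != j1 -> F j = 0) -> \sum_j F j = F j1.
Proof.
move=> H; rewrite (bigD1 j1) //= big1 ?addr0 // => j h; exact: H.
Qed.

Section Blk.
End Blk.

Lemma even_mul (C : numClosedFieldType) D f g :
  even_blk D f *m even_blk D g =
  even_blk D (fun i r c => f i r false * g i false c + f i r true * g i true c :> C).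
Proof.
apply/matrixP => a b; rewrite !mxE.
have ha : (a./2 < D)%N.
  by rewrite ltn_half_double -mul2n.
case: eqP => [eab|neab].
  have h1 : ((a./2).*2 < 2 * D)%N by rewrite -mul2n ltn_pmul2l.
  have h2 : ((a./2).*2.+1 < 2 * D)%N by rewrite -mul2n; lia.
  rewrite (@sum_two _ _ _ (Ordinal h1) (Ordinal h2)).
  - rewrite !mxE /=.
    by rewrite doubleK uphalf_double odd_double eab !eqxx.
  - by rewrite -(inj_eq val_inj) /= neq_ltn ltnSn.
  - move=> j hj1 hj2; rewrite !mxE.
    case: eqP => [e1|]; last by rewrite mul0r.
    exfalso; move: hj1 hj2; rewrite -!(inj_eq val_inj) /= e1 -(odd_double_half j).
    by rewrite half_bit_double; case: (odd j) => /=; rewrite ?add1n ?add0n eqxx.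
rewrite big1 // => j _; rewrite !mxE.
case: eqP => [e1|]; last by rewrite mul0r.
case: eqP => [e2|]; last by rewrite mulr0.
by exfalso; apply: neab; rewrite e1 e2.
Qed.

Lemma uphalf_cases (j i : nat) : uphalf j = i ->
  (j = i.*2 /\ ~~ odd j) \/ (j = i.*2.-1 /\ odd j /\ (0 < i)%N).
Proof.
move=> <-; rewrite uphalf_half; case: (boolP (odd j)) => o.
  right; rewrite /=; split=> //; rewrite -[in LHS](odd_double_half j) o.
  by rewrite add0n add1n.
by left; split => //; rewrite -[in LHS](odd_double_half j) (negbTE o).
Qed.

Lemma uphalf_pred2 i : (0 < i)%N -> uphalf (i.*2.-1) = i.
Proof. by move=> ip; rewrite -(prednK ip) doubleS /= doubleK. Qed.
Lemma odd_pred2 i : (0 < i)%N -> odd (i.*2.-1) = true.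
Proof. by move=> ip; rewrite -(prednK ip) doubleS /= odd_double. Qed.

Lemma odd_mul (C : numClosedFieldType) D f g :
  odd_blk D f *m odd_blk D g =
  odd_blk D (fun i r c => (if (0 < i)%N then f i r false * g i false c else 0)
                        + (if (i < D)%N then f i r true * g i true c else 0) :> C).
Proof.
apply/matrixP => a b; rewrite !mxE -!uphalfE.
have ha : (uphalf a <= D)%N by rewrite leq_uphalf_double -mul2n ltnW.
case: eqP => [eab|neab]; last first.
  rewrite big1 // => j _; rewrite !mxE -!uphalfE.
  case: eqP => [e1|]; last by rewrite mul0r.
  case: eqP => [e2|]; last by rewrite mulr0.
  by exfalso; apply: neab; rewrite e1 e2.
set i := uphalf a in ha eab *.
have term : forall j : 'I_(2 * D), uphalf j != i ->
    odd_blk D f a j * odd_blk D g j b = 0.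
  by move=> j hj; rewrite !mxE -!uphalfE -/i eq_sym (negbTE hj) mul0r.
have hpos : (0 < i)%N -> (i.*2.-1 < 2 * D)%N.
  by move=> ip; rewrite -mul2n; lia.
have hlt : (i < D)%N -> (i.*2 < 2 * D)%N.
  by move=> ip; rewrite -mul2n; lia.
case: (posnP i) => [i0|ipos].
  have iD : (i < D)%N by rewrite i0; move: (ltn_ord a); lia.
  rewrite (@sum_one _ _ _ (Ordinal (hlt iD))); last first.
    move=> j hj; apply: term; apply/eqP => /uphalf_cases [[jv _]|[_ [_]]]; last by rewrite i0.
    by move: hj; rewrite -(inj_eq val_inj) /= jv eqxx.
  rewrite !mxE -!uphalfE -/i /= uphalf_double odd_double /= -eab.
  by rewrite eqxx iD add0r.
case: (ltnP i D) => [iD|iD].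
  rewrite (@sum_two _ _ _ (Ordinal (hpos ipos)) (Ordinal (hlt iD)))/=; last first.
  - move=> j hj1 hj2; apply: term; apply/eqP => /uphalf_cases [[jv _]|[jv _]].
      by move: hj2; rewrite -(inj_eq val_inj) /= jv eqxx.
    by move: hj1; rewrite -(inj_eq val_inj) /= jv eqxx.
  - rewrite -(inj_eq val_inj) /=; lia.
  rewrite !mxE -!uphalfE -/i /= uphalf_double odd_double uphalf_pred2 // odd_pred2 // /= -eab.
  by rewrite eqxx.
have iD' : i = D by apply/eqP; rewrite eqn_leq ha iD.
rewrite (@sum_one _ _ _ (Ordinal (hpos ipos))); last first.
  move=> j hj; apply: term; apply/eqP => /uphalf_cases [[jv _]|[jv _]].
    by exfalso; move: (ltn_ord j); rewrite jv iD' -mul2n ltnn.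
  by move: hj; rewrite -(inj_eq val_inj) /= jv eqxx.
rewrite !mxE -!uphalfE -/i /= uphalf_pred2 // odd_pred2 // /= -eab.
by rewrite eqxx addr0.
Qed.

Section S.
Variable C : numClosedFieldType.
Variable D : nat.
Implicit Types f g : nat -> bool -> bool -> C.

Lemma even_add f g : even_blk D f + even_blk D g = even_blk D (fun i r c => f i r c + g i r c).
Proof. by apply/matrixP => a b; rewrite !mxE; case: eqP; rewrite ?addr0. Qed.
Lemma odd_add f g : odd_blk D f + odd_blk D g = odd_blk D (fun i r c => f i r c + g i r c).
Proof. by apply/matrixP => a b; rewrite !mxE; case: eqP; rewrite ?addr0. Qed.
Lemma even_opp f : - even_blk D f = even_blk D (fun i r c => - f i r c).
Proof. by apply/matrixP => a b; rewrite !mxE; case: eqP; rewrite ?oppr0. Qed.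
Lemma odd_opp f : - odd_blk D f = odd_blk D (fun i r c => - f i r c).
Proof. by apply/matrixP => a b; rewrite !mxE; case: eqP; rewrite ?oppr0. Qed.
Lemma even_0 : 0 = even_blk D (fun _ _ _ => 0 : C).
Proof. by apply/matrixP => a b; rewrite !mxE; case: eqP. Qed.
Lemma odd_0 : 0 = odd_blk D (fun _ _ _ => 0 : C).
Proof. by apply/matrixP => a b; rewrite !mxE; case: eqP. Qed.
Lemma even_scal (x : C) : x%:M = even_blk D (fun _ r c => if r == c then x else 0).
Proof.
apply/matrixP => a b; rewrite !mxE -(inj_eq val_inj) /= eqn_half.
by case: eqP => _ //=; case: eqP.
Qed.
Lemma odd_scal (x : C) : x%:M = odd_blk D (fun _ r c => if r == c then x else 0).
Proof.
apply/matrixP => a b; rewrite !mxE -(inj_eq val_inj) /= -eqSS eqn_half.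
by case: eqP => _ //=; case: eqP.
Qed.
Lemma even_ext f g : (forall i r c, (i < D)%N -> f i r c = g i r c) ->
  even_blk D f = even_blk D g.
Proof.
move=> H; apply/matrixP => a b; rewrite !mxE; case: eqP => // _; apply: H.
by rewrite ltn_half_double -mul2n.
Qed.
Lemma odd_ext f g : (forall i r c, (i <= D)%N -> (i = 0%N -> r = true /\ c = true) ->
   (i = D -> r = false /\ c = false) -> f i r c = g i r c) ->
  odd_blk D f = odd_blk D g.
Proof.
move=> H; apply/matrixP => a b; rewrite !mxE -!uphalfE; case: eqP => // eab; apply: H.
- by rewrite leq_uphalf_double -mul2n ltnW.
- move=> h0; have := uphalf_cases _ _ h0; have := uphalf_cases _ _ (etrans (esym eab) h0).
  by move=> [[-> _]|[_ [_]]] // [[-> _]|[_ [_]]].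
- move=> hD; have := uphalf_cases _ _ hD; have := uphalf_cases _ _ (etrans (esym eab) hD).
  have := ltn_ord a; have := ltn_ord b.
  move=> lb la [[hb _]|[_ [ob _]]]; first by move: lb; rewrite hb -mul2n ltnn.
  move=> [[ha _]|[_ [oa _]]]; first by move: la; rewrite ha -mul2n ltnn.
  by rewrite /= oa ob.
Qed.

Lemma mul_evdiag (A : 'M[C]_(2 * D)) (d : nat -> C) :
  A *m even_blk D (fun i r c => if ~~ r && ~~ c then d i else 0) =
  \matrix_(a, b) (A a b * (if odd b then 0 else d (b : nat)./2)).
Proof.
apply/matrixP => a b; rewrite !mxE (@sum_one _ _ _ b).
  by rewrite !mxE eqxx; case: (odd b); rewrite //= mulr0.
move=> j hj; rewrite !mxE; case: eqP => e; last by rewrite mulr0.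
have : odd j != odd b.
  by apply: contra hj => /eqP o; rewrite -(inj_eq val_inj) eqn_half e o !eqxx.
by case: (odd j); case: (odd b); rewrite //= mulr0.
Qed.
End S.

Section Num.
Variable C : numClosedFieldType.
Variable q : nat.
Hypothesis hq : (0 < q)%N.
Local Notation r := (qr C q).

Lemma Qr4 : (q%:R : C) = r ^+ 4.
Proof. by rewrite /qr rootCK. Qed.
Lemma r_neq0 : r != 0.
Proof.
apply/negP => /eqP h; have := Qr4; rewrite h expr0n /= => /eqP.
by rewrite pnatr_eq0; move: hq; case: q.
Qed.
Lemma expz_sub (x : C) a b : x != 0 -> x ^ (a%:Z - b%:Z) = x ^+ a / x ^+ b.
Proof.
move=> x0; rewrite exprzDr ?unitfE // -exprnN; done.
Qed.
Lemma qpP n : qp C q n%:Z = r ^+ n.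
Proof. by []. Qed.
Lemma qpN n : qp C q (- n%:Z) = (r ^+ n)^-1.
Proof. by rewrite /qp -exprnN. Qed.
Lemma qpS a b : qp C q (a%:Z - b%:Z) = r ^+ a / r ^+ b.
Proof. by rewrite /qp expz_sub // r_neq0. Qed.
Lemma qpS3 a b c : qp C q (a%:Z - b%:Z - c%:Z) = r ^+ a / (r ^+ b * r ^+ c).
Proof. by rewrite -addrA -opprD -PoszD qpS exprD. Qed.
Lemma Qpow i : (q%:R : C) ^+ i = r ^+ (4 * i).
Proof. by rewrite Qr4 exprM. Qed.
End Num.

Lemma T_quad (C : numClosedFieldType) q D m : (0 < q)%N ->
  (tmat C q D m - (kappa C q m)%:M) *m (tmat C q D m + (kappa C q m)^-1%:M) = 0.
Proof.
move=> hq; rewrite /tmat (@even_scal _ D (kappa C q m)) (@even_scal _ D (kappa C q m)^-1).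
rewrite even_opp !even_add even_mul (even_0 C D); apply: even_ext => i r c _.
have K0 : qr C q ^+ m != 0 by rewrite expf_neq0 // r_neq0.
rewrite /kappa /t_blk !qpN ?qpP invrK.
by case: r; case: c => /=; field.
Qed.

Lemma Tp_quad (C : numClosedFieldType) q D : (0 < q)%N ->
  (t'mat C q D - (kappa' C q D)%:M) *m (t'mat C q D + (kappa' C q D)^-1%:M) = 0.
Proof.
move=> hq; rewrite /t'mat (@odd_scal _ D (kappa' C q D)) (@odd_scal _ D (kappa' C q D)^-1).
rewrite odd_opp !odd_add odd_mul (odd_0 C D); apply: odd_ext => i r c iD h0 hD.
have R0 : qr C q ^+ (2 * D) != 0 by rewrite expf_neq0 // r_neq0.
have I0 : ('i : C) != 0 by rewrite -sqrf_eq0 sqrCi oppr_eq0 oner_eq0.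
have Q0 : (q%:R : C) != 0 by rewrite pnatr_eq0 -lt0n.
have Hi : ('i : C) ^+ 2 = -1 := sqrCi C.
rewrite /kappa' /t'_blk !qpN ?qpP.
case: (posnP i) => [i0|ipos].
  have [-> ->] := h0 i0; rewrite i0 /=.
  case: (posnP D) => [D0|Dpos]; first by rewrite addr0.
  ring.
have ne0 : (i == 0%N) = false by rewrite gtn_eqF.
case: (eqVneq i D) => [iDe|iDn].
  have [-> ->] := hD iDe; by case: (i < D)%N => /=; ring.
have iltD : (i < D)%N by rewrite ltn_neqAle iDn.
rewrite iltD.
have P0 : qr C q ^+ (4 * i) != 0 by rewrite expf_neq0 // r_neq0.
have R2 : qr C q ^+ (4 * D) = qr C q ^+ (2 * D) * qr C q ^+ (2 * D).
  by rewrite -exprD; congr (_ ^+ _); lia.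
case: r {h0 hD}; case: c => /=; rewrite ?(@expz_sub _ _ _ _ Q0) ?(@qpS _ _ hq) !Qpow R2;
  move: R0 P0 Hi I0; generalize (qr C q ^+ (2 * D)) (qr C q ^+ (4 * i)) ('i : C) => R P I R0 P0 Hi I0.
  all: by field: Hi; rewrite R0 I0.
Qed.

Lemma U_rel (C : numClosedFieldType) q D :
  umat C q D *m (umat C q D + 1%:M) = 0.
Proof.
rewrite /umat (@odd_scal _ D 1) odd_add odd_mul (odd_0 C D); apply: odd_ext => i r c iD h0 hD.
rewrite /u_blk.
case: (posnP i) => [i0|ipos].
  by case: (i < D)%N => /=; ring.
case: (eqVneq i D) => [iDe|iDn].
  by have [-> ->] := hD iDe; rewrite iDe ltnn eqxx /=; ring.
rewrite (ltn_neqAle i D) iDn iD.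
by case: r {h0 hD}; case: c => /=; ring.
Qed.

Lemma Up_sq (C : numClosedFieldType) q D m :
  u'mat C q D m *m u'mat C q D m = 0.
Proof.
rewrite /u'mat even_mul (even_0 C D); apply: even_ext => i r c _.
by case: r; case: c => /=; ring.
Qed.

Lemma mixed (C : numClosedFieldType) q D m : (0 < q)%N ->
  umat C q D + 1%:M = t'mat C q D *m (tmat C q D m *m u'mat C q D m).
Proof.
move=> hq.
pose d i := qp C q m%:Z * (- 'i * qp C q ((2 * D)%:Z - m%:Z - (4 * i)%:Z)).
have -> : tmat C q D m *m u'mat C q D m =
    even_blk D (fun i r c => if ~~ r && ~~ c then d i else 0).
  rewrite /tmat /u'mat even_mul; apply: even_ext => i r c _.
  by case: r; case: c => /=; rewrite /d; ring.
rewrite mul_evdiag /umat (@odd_scal _ D 1) odd_add.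
apply/matrixP => a b; rewrite !mxE -!uphalfE /=.
have R0 : qr C q ^+ (2 * D) != 0 by rewrite expf_neq0 // r_neq0.
have K0 : qr C q ^+ m != 0 by rewrite expf_neq0 // r_neq0.
have I0 : ('i : C) != 0 by rewrite -sqrf_eq0 sqrCi oppr_eq0 oner_eq0.
have Q0 : (q%:R : C) != 0 by rewrite pnatr_eq0 -lt0n.
have Hi : ('i : C) ^+ 2 = -1 := sqrCi C.
case: eqP => [eab|neab]; last by rewrite mul0r.
case: (boolP (odd b)) => ob.
  rewrite mulr0 /u_blk.
  have bpos : (0 < uphalf b)%N by rewrite uphalf_gt0; case: (b : nat) ob.
  rewrite eab (gtn_eqF bpos); case: eqP => _ /=.
    by case: (odd a) => /=; ring.
  by case: (odd a) => /=; ring.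
have ebh : b./2 = uphalf b by rewrite uphalf_half (negbTE ob).
rewrite ebh /d -eab.
set i := uphalf a in eab *.
have iD : (i < D)%N.
  by rewrite eab -ebh ltn_half_double -mul2n.
rewrite /u_blk /t'_blk (ltn_eqF iD).
case: (posnP i) => [i0|ipos].
  have ao : odd a = false.
    by have [[_ /negbTE]|[_ [_]]] := uphalf_cases _ _ i0.
  rewrite ao /= !qpN ?qpP ?(@qpS3 _ _ hq) /= i0 muln0 expr0 mulr1.
  move: R0 K0 Hi I0; generalize (qr C q ^+ (2 * D)) (qr C q ^+ m) ('i : C) => R K I R0 K0 Hi I0.
  by field: Hi; rewrite ?R0 ?K0 ?I0.
have P0 : qr C q ^+ (4 * i) != 0 by rewrite expf_neq0 // r_neq0.
have R2 : qr C q ^+ (4 * D) = qr C q ^+ (2 * D) * qr C q ^+ (2 * D).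
  by rewrite -exprD; congr (_ ^+ _); lia.
case: (odd a) => /=; rewrite ?qpN ?qpP ?(@qpS3 _ _ hq) ?(@qpS _ _ hq) ?(@expz_sub _ _ _ _ Q0) ?(exprB (ltnW iD)) ?unitfE // ?Qpow ?R2;
  move: R0 K0 P0 Hi I0; generalize (qr C q ^+ (2 * D)) (qr C q ^+ m) (qr C q ^+ (4 * i)) ('i : C) => R K P I R0 K0 P0 Hi I0;
  by field: Hi; rewrite ?R0 ?K0 ?I0 ?P0.
Qed.

Lemma quad_inv (C : numClosedFieldType) n (A : 'M[C]_n) (a : C) : a != 0 ->
  (A - a%:M) *m (A + a^-1%:M) = 0 ->
  A *m (A + (a^-1 - a)%:M) = 1%:M /\ (A + (a^-1 - a)%:M) *m A = 1%:M.
Proof.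
move=> a0 H.
have E : (A + (a^-1 - a)%:M) *m A = A *m (A + (a^-1 - a)%:M).
  by rewrite mulmxDl mulmxDr mul_scalar_mx mul_mx_scalar.
suff H1 : A *m (A + (a^-1 - a)%:M) = 1%:M by rewrite E H1.
apply: subr0_eq; rewrite -H mulmxBl !mulmxDr !mul_mx_scalar mul_scalar_mx scale_scalar_mx mulVf //.
by rewrite scalerBl opprD !addrA.
Qed.

Theorem proposition8p7 (C : numClosedFieldType) (p k D m : nat) :
  prime p -> (0 < k)%N -> (3 <= D)%N -> (m <= 4)%N ->
  (odd m -> exists s : nat, (p ^ k = s ^ 2)%N) ->
  exists Ti Xi : 'M[C]_(2 * D),
    nilDAHA_rep (kappa C (p ^ k) m) (kappa' C (p ^ k) D)
      (tmat C (p ^ k) D m) Ti (umat C (p ^ k) D) (xmat C (p ^ k) D m) Xi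
    /\ xmat C (p ^ k) D m *m Ti = t'mat C (p ^ k) D
    /\ Xi *m (umat C (p ^ k) D + 1%:M) = u'mat C (p ^ k) D m.
Proof.
move=> pp _ _ _ _.
have hq : (0 < p ^ k)%N by rewrite expn_gt0 prime_gt0.
have k0 : kappa C (p ^ k) m != 0.
  by rewrite /kappa qpN invr_eq0 expf_neq0 // r_neq0.
have k0' : kappa' C (p ^ k) D != 0.
  rewrite /kappa' qpN mulf_neq0 ?invr_eq0 ?expf_neq0 ?r_neq0 //.
  by rewrite -sqrf_eq0 sqrCi oppr_eq0 oner_eq0.
have [HT1 HT2] := @quad_inv _ _ _ _ k0 (T_quad C (p ^ k) D m hq).
have [HP1 HP2] := @quad_inv _ _ _ _ k0' (Tp_quad C (p ^ k) D hq).
set T := tmat C (p ^ k) D m in HT1 HT2 *.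
set T' := t'mat C (p ^ k) D in HP1 HP2 *.
set Ti := T + _ in HT1 HT2 *.
set T'i := T' + _ in HP1 HP2 *.
have XT : xmat C (p ^ k) D m *m Ti = T' by rewrite /xmat -/T -/T' -mulmxA HT1 mulmx1.
have Up : (Ti *m T'i) *m (umat C (p ^ k) D + 1%:M) = u'mat C (p ^ k) D m.
  by rewrite (mixed C (p ^ k) D m hq) -/T -/T' -mulmxA (mulmxA T'i) HP2 mul1mx mulmxA HT2 mul1mx.
exists Ti, (Ti *m T'i); rewrite /nilDAHA_rep /= XT Up.
split; last by split.
rewrite /xmat -/T -/T'.
do !split => //.
- by rewrite -mulmxA (mulmxA T) HT1 mul1mx HP1.
- by rewrite -mulmxA (mulmxA T'i) HP2 mul1mx HT2.
- exact: T_quad.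
- exact: Tp_quad.
- exact: U_rel.
- exact: Up_sq.
Qed.
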